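(* Let $G$ be a finite nonabelian group. Then $U(G)\le G'\cap Z(G)\le G'Z(G)\le V(G)$.
   Context: For a normal subgroup $H$ of $G$, $\mathrm{Irr}(G\mid H)$ is the set of $\chi\in\mathrm{Irr}(G)$ with $H\not\le\ker(\chi)$, and $V(G\mid H)$ is the subgroup generated by all $g\in G$ such that $\chi(g)\ne0$ for some $\chi\in\mathrm{Irr}(G\mid H)$. For a normal subgroup $N$, $U(G\mid N)$ is the product of all normal subgroups $H$ of $G$ with $V(G\mid H)\le N$, and $U(G)=U(G\mid Z(G))$. $V(G)$ is the subgroup generated by all $g\in G$ such that $\chi(g)\neq 0$ for some nonlinear $\chi\in\mathrm{Irr}(G)$ (equivalently $V(G)=V(G\mid G')$). *)

(* Defs.v *)
From mathcomp Require Import all_boot all_order all_algebra all_fingroup all_solvable all_field all_character.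
Set Implicit Arguments. Unset Strict Implicit. Unset Printing Implicit Defensive.
Import GroupScope GRing.Theory Num.Theory.
Local Open Scope ring_scope.

Section Defs.
Variable gT : finGroupType.

Definition Irr_rel (G H : {group gT}) : pred (Iirr G) :=
  fun i => ~~ (H \subset cfker 'chi[G]_i).

Definition Vrel (G H : {group gT}) : {set gT} :=
  <<[set g in G | [exists i : Iirr G, @Irr_rel G H i && ('chi[G]_i g != 0)]]>>.

Definition Urel (G N : {group gT}) : {set gT} :=
  <<\bigcup_(H : {group gT} | (H <| G) && (Vrel G H \subset N)) H>>.

Definition Ugrp (G : {group gT}) : {set gT} := Urel G 'Z(G)%G.

Definition Vgrp (G : {group gT}) : {set gT} :=
  <<[set g in G | [exists i : Iirr G,
       (~~ ('chi[G]_i \is a linear_char)) && ('chi[G]_i g != 0)]]>>.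
End Defs.
Arguments Irr_rel {gT} G H i.

(* Main.v *)
Require Import Defs.
From mathcomp Require Import all_boot all_order all_algebra all_fingroup all_solvable all_field all_character.
Import GroupScope GRing.Theory Num.Theory.
Local Open Scope ring_scope.

Lemma exists_rel (gT : finGroupType) (G H : {group gT}) g :
  H <| G -> g \in H -> g != 1%g ->
  exists i, Irr_rel G H i && ('chi[G]_i g != 0).
Proof.
move=> nsHG Hg ntg; have sHG := normal_sub nsHG.
have Gg : g \in G := subsetP sHG g Hg.
case: (boolP [exists i, Irr_rel G H i && ('chi[G]_i g != 0)]) => [/existsP//|]; rewrite negb_exists => /forallP allz; exfalso.
have := second_orthogonality_relation g (group1 G).
rewrite class1G inE (negbTE ntg) mulr0n (bigID (Irr_rel G H)) /=.
rewrite big1 ?add0r => [E|i ri]; last first.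
  by have := allz i; rewrite ri /= negbK => /eqP ->; rewrite mul0r.
have H0 : ~~ Irr_rel G H 0 by rewrite /Irr_rel negbK irr0 cfker_cfun1.
have hz : forall i : Iirr G, ~~ Irr_rel G H i -> 'chi_i g * ('chi_i 1%g)^* = 'chi_i 1%g ^+ 2.
  move=> i; rewrite /Irr_rel negbK => /subsetP/(_ g Hg) kg.
  by rewrite -(mulg1 g) (cfkerMl _ kg) conj_natr ?Cnat_irr1 // expr2.
have nn : forall i, ~~ Irr_rel G H i -> 0 <= 'chi_i g * ('chi_i 1%g)^*.
  by move=> i ri; rewrite hz // exprn_ge0 // natr_ge0 // Cnat_irr1.
have := psumr_eq0P nn E H0.
by rewrite hz // irr0 cfun11 expr1n => /eqP; rewrite oner_eq0.
Qed.

Lemma center_nz (gT : finGroupType) (G : {group gT}) i z :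
  z \in 'Z(G) -> 'chi[G]_i z != 0.
Proof.
move=> Zz; have Gz : z \in G := subsetP (center_sub G) z Zz.
have : z \in 'Z('chi[G]_i)%CF.
  by rewrite -cap_cfcenter_irr in Zz; move/bigcapP: Zz; apply.
rewrite irr_cfcenterE //; apply: contraL => /eqP ->.
by rewrite normr0 eq_sym irr1_neq0.
Qed.

Lemma in_Vrel (gT : finGroupType) (G H : {group gT}) g :
  H <| G -> g \in H -> g \in Vrel G H.
Proof.
move=> nsHG Hg; have [->|ntg] := eqVneq g 1%g; first by rewrite /Vrel group1.
have [i ri] := @exists_rel _ G H g nsHG Hg ntg.
apply: mem_gen; rewrite inE (subsetP (normal_sub nsHG)) //=.
by apply/existsP; exists i.
Qed.

Local Close Scope ring_scope.

Theorem lemma6p2 (gT : finGroupType) (G : {group gT}) :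
  ~~ abelian G ->
  [/\ Ugrp G \subset G^`(1) :&: 'Z(G),
      G^`(1) :&: 'Z(G) \subset G^`(1) * 'Z(G)
    & G^`(1) * 'Z(G) \subset Vgrp G].
Proof.
move=> nab; have nsD : G^`(1) <| G := der_normal 1 G.
split.
- rewrite /Ugrp /Urel gen_subG; apply/bigcupsP => H /andP[nsHG sVZ].
  rewrite subsetI; apply/andP; split; last first.
    by apply/subsetP => h Hh; apply: (subsetP sVZ); apply: in_Vrel.
  apply/contraR: nab => nHD.
  have [i /andP[Di nHi]] : exists i, (G^`(1) \subset cfker ('chi[G]_i)%R) && ~~ (H \subset cfker ('chi[G]_i)%R).
    case: (boolP [exists i, (G^`(1) \subset cfker ('chi[G]_i)%R) && ~~ (H \subset cfker ('chi[G]_i)%R)]) => [/existsP//|].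
    rewrite negb_exists => /forallP hall; case/negP: nHD.
    rewrite -(cap_cfker_normal nsD); apply/bigcapsP => i Di.
    by have := hall i; rewrite Di /= negbK.
  have lin : ('chi[G]_i)%R \is a linear_char by rewrite lin_irr_der1.
  have sGZ : G \subset 'Z(G).
    apply: subset_trans sVZ; apply/subsetP => g Gg; apply: mem_gen.
    rewrite inE Gg /=; apply/existsP; exists i; rewrite /Irr_rel nHi /=.
    exact: lin_char_neq0.
  by apply/center_idP; apply/eqP; rewrite eqEsubset center_sub sGZ.
- exact: subset_trans (subsetIl _ _) (mulG_subl _ _).
- rewrite /Vgrp; apply: mul_subG.
    apply/subsetP => g Dg; have [->|ntg] := eqVneq g 1%g; first exact: group1.
    have [i ri] := @exists_rel _ G _ g nsD Dg ntg.
    apply: mem_gen; rewrite inE (subsetP (normal_sub nsD)) //=.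
    by apply/existsP; exists i; rewrite lin_irr_der1.
  have [i nli] : exists i, ~~ (('chi[G]_i)%R \is a linear_char).
    case: (boolP [exists i, ~~ (('chi[G]_i)%R \is a linear_char)]) => [/existsP//|].
    rewrite negb_exists => /forallP h; case/negP: nab.
    by apply/char_abelianP => i; have := h i; rewrite negbK.
  apply/subsetP => z Zz; apply: mem_gen.
  rewrite inE (subsetP (center_sub G)) //=; apply/existsP; exists i.
  by rewrite nli center_nz.
Qed.
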